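(* Let $\widehat G$ be a countable discrete abelian group, $m$ a probability measure on $\widehat G$ with $m(\{\chi\})>0$ for all $\chi$, and $m^{\mathbf D}$ the product measure on $\widehat G^{\mathbf D}$. For $g,g'\in\widehat G_{fr}$, the measures $g_*m^{\mathbf D}$ and $g'_*m^{\mathbf D}$ are mutually singular if and only if there exists $d\in\mathbf D$ with $g(d)_*m\ne g'(d)_*m$; otherwise they are equal. If $\widehat G$ is torsion free, then the measures $g_*m^{\mathbf D}$, $g\in\widehat G_{fr}$, are pairwise mutually singular (for distinct $g$).
   Context: $\mathbf D=\{a/2^n:n\ge1,0\le a\le2^n-1\}\subset[0,1)$. A standard dyadic partition (s.d.p.) is $0=d_1<\dots<d_{n+1}=1$ with each $(d_j,d_{j+1})$ of the form $(a/2^k,(a+1)/2^k)$. $\widehat G_{fr}$ is the group (pointwise multiplication) of maps $g:\mathbf D\to\widehat G$ for which there is an s.d.p. such that $g$ is constant on each $[d_j,d_{j+1})\cap\mathbf D$. $\widehat G_{fr}$ acts on $\widehat G^{\mathbf D}$ by $(gy)(d)=g(d)y(d)$, and $g_*m^{\mathbf D}$ is the pushforward of $m^{\mathbf D}$ under $y\mapsto gy$; for $\chi\in\widehat G$, $\chi_*m$ is the pushforward of $m$ under translation by $\chi$. *)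

(* Defs.v *)
From HB Require Import structures.
From mathcomp Require Import all_boot all_order all_algebra.
From mathcomp Require Import all_classical all_reals all_analysis.

Set Implicit Arguments.
Unset Strict Implicit.
Unset Printing Implicit Defensive.

Import Order.TTheory GRing.Theory Num.Theory.
Local Open Scope classical_set_scope.
Local Open Scope ring_scope.

Definition dyadicP (q : rat) : Prop :=
  exists n a : nat, (1 <= n)%N /\ (a <= 2 ^ n - 1)%N /\ q = a%:R / (2 ^ n)%:R.

Definition D : Type := {q : rat | `[< dyadicP q >]}.
HB.instance Definition _ := [isSub for (@sval rat (fun q => `[< dyadicP q >]))].
HB.instance Definition _ := [Countable of D by <:].

(* A standard dyadic partition 0 = d_1 < ... < d_{n+1} = 1, n >= 1, given as
   the sequence [:: d_1; ...; d_{n+1}], each (d_j, d_{j+1}) being of the form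
   (a/2^k, (a+1)/2^k). *)
Definition is_sdp (s : seq rat) : Prop :=
  (2 <= size s)%N /\ head 0 s = 0 /\ last 0 s = 1 /\
  forall j : nat, (j.+1 < size s)%N ->
    exists k a : nat, nth 0 s j = a%:R / (2 ^ k)%:R /\
                      nth 0 s j.+1 = a.+1%:R / (2 ^ k)%:R.

Definition is_fr (G : Type) (g : D -> G) : Prop :=
  exists s : seq rat, is_sdp s /\
    forall j : nat, (j.+1 < size s)%N ->
      forall d d' : D,
        nth 0 s j <= sval d < nth 0 s j.+1 ->
        nth 0 s j <= sval d' < nth 0 s j.+1 -> g d = g d'.

Definition disc (G : countZmodType) : Type := G.
HB.instance Definition _ (G : countZmodType) := Countable.on (disc G).
HB.instance Definition _ (G : countZmodType) := isPointed.Build (disc G) 0.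
HB.instance Definition _ (G : countZmodType) :=
  @isMeasurable.Build default_measure_display (disc G) discrete_measurable
    discrete_measurable0 discrete_measurableC discrete_measurableU.

Definition conf (G : countZmodType) : Type := D -> G.
HB.instance Definition _ (G : countZmodType) := gen_eqMixin (conf G).
HB.instance Definition _ (G : countZmodType) := gen_choiceMixin (conf G).
HB.instance Definition _ (G : countZmodType) :=
  isPointed.Build (conf G) (fun _ => 0).

Definition cylinders (G : countZmodType) : set (set (conf G)) :=
  [set B | exists (d : D) (A : set G), B = [set y : conf G | A (y d)]].

Notation Cfg G := (g_sigma_algebraType (@cylinders G)).

(* The infinite product measure m^D on Ghat^D: the (unique) probability
   measure on the product sigma-algebra whose value on finite-dimensional
   cylinders is the product of the values of m. *)
Definition is_product_measure (R : realType) (G : countZmodType)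
    (m : set (disc G) -> \bar R) (P : set (Cfg G) -> \bar R) : Prop :=
  forall (ds : seq D) (A : D -> set G), uniq ds ->
    P [set y : Cfg G | forall d, d \in ds -> A d (y d)] =
    (\prod_(d <- ds) m (A d))%E.

(* the action of Ghat_fr on Ghat^D: (g y)(d) = g(d) y(d) (written additively) *)
Definition act (G : countZmodType) (g : D -> G) : Cfg G -> Cfg G :=
  fun y d => g d + y d.

Definition transl (G : countZmodType) (chi : G) : disc G -> disc G :=
  fun x => chi + x.

Definition meq d (T : measurableType d) (R : realType) (mu nu : set T -> \bar R) : Prop :=
  forall A, measurable A -> mu A = nu A.

Definition msingular d (T : measurableType d) (R : realType) (mu nu : set T -> \bar R) : Prop :=
  exists A, measurable A /\ mu A = 0%E /\ nu (~` A) = 0%E.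

Definition torsion_free (G : zmodType) : Prop :=
  forall (x : G) (n : nat), (0 < n)%N -> x *+ n = 0 -> x = 0.

(* Main.v *)
Require Import Defs.
From HB Require Import structures.
From mathcomp Require Import all_boot all_order all_algebra.
From mathcomp Require Import all_classical all_reals all_analysis.
From mathcomp Require Import ring lra.
Import Order.TTheory GRing.Theory Num.Theory.
Local Open Scope classical_set_scope.
Local Open Scope ring_scope.

Section Basics.
Context (R : realType) (G : countZmodType).

Lemma cyl_meas (d : D) (A : set G) :
  measurable ([set y : Cfg G | A (y d)]).
Proof. by apply: sub_sigma_algebra; exists d, A. Qed.

Lemma fin_meas (I : finType) (E : I -> D) (B : I -> set G) :
  measurable [set z : Cfg G | forall i, B i (z (E i))].
Proof.
rewrite (_ : [set z : Cfg G | forall i, B i (z (E i))] =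
  \bigcap_(i in [set: I]) [set z : Cfg G | B i (z (E i))]); last first.
  apply/seteqP; split => z /= H.
    by move=> i _; apply: H.
  by move=> i; apply: H.
apply: fin_bigcap_measurable => //; last by move=> i _; exact: cyl_meas.
Qed.

Lemma seq_meas (ds : seq D) (A : D -> set G) :
  measurable [set z : Cfg G | forall d, d \in ds -> A d (z d)].
Proof.
elim: ds => [|x ds IH].
  by rewrite (_ : [set z | _] = setT); [exact: measurableT|
    apply/seteqP; split => z //= _ d; rewrite in_nil].
rewrite (_ : [set z | _] = [set z : Cfg G | A x (z x)] `&`
   [set z : Cfg G | forall d, d \in ds -> A d (z d)]); last first.
  apply/seteqP; split => z /=.
    by move=> H; split; [apply: H; rewrite mem_head|move=> d dds; apply: H; rewrite in_cons dds orbT].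
  by move=> [H1 H2] d; rewrite in_cons => /orP[/eqP->//|]; exact: H2.
exact: measurableI (cyl_meas _ _) IH.
Qed.

Lemma act_meas (g : D -> G) : measurable_fun setT (act g : Cfg G -> Cfg G).
Proof.
have := @measurability _ _ (Cfg G) (Cfg G) setT (act g) (@cylinders G) erefl.
apply.
move=> _ [B [d [A ->]] <-].
rewrite setTI.
exact: (cyl_meas d (fun w => A (g d + w))).
Qed.

Definition pmu (mu : measure (Cfg G) R) (g : D -> G) : measure (Cfg G) R :=
  measure_function_pushforward__canonical__measure_function_Measure mu (act_meas g).

Lemma pmuE mu g A : pmu mu g A = pushforward mu (act g) A.
Proof. by []. Qed.

Lemma fdd_fin (mD : measure (Cfg G) R) (m : set (disc G) -> \bar R)
  (prod : is_product_measure m mD) (I : finType) (E : I -> D)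
  (injE : injective E) (B : I -> set G) :
  mD [set z | forall i, B i (z (E i))] = (\prod_(i : I) m (B i))%E.
Proof.
pose A := fun d => [set w : G | forall i, E i = d -> B i w].
have uds : uniq [seq E i | i <- enum I] by rewrite map_inj_uniq ?enum_uniq.
have := prod _ A uds.
rewrite (_ : [set y | _] = [set z | forall i, B i (z (E i))]); last first.
  apply/seteqP; split => z /= H.
    by move=> i; apply: (H (E i)); [apply: map_f; rewrite mem_enum|].
  move=> d /mapP [j _ ->] i /injE ->; exact: H.
move=> ->; rewrite big_map big_enum /=.
apply: eq_bigr => i _; congr (m _).
by apply/seteqP; split => w /=; [move/(_ i erefl)|move=> H j /injE ->].
Qed.

Lemma fdd_push (mD : measure (Cfg G) R) (m : set (disc G) -> \bar R)
  (prod : is_product_measure m mD) (g : D -> G) (I : finType) (E : I -> D)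
  (injE : injective E) (B : I -> set G) :
  pushforward mD (act g) [set z | forall i, B i (z (E i))] =
   (\prod_(i : I) pushforward m (transl (g (E i))) (B i))%E.
Proof.
have := fdd_fin _ _ prod _ _ injE (fun i => transl (g (E i)) @^-1` B i).
rewrite /pushforward => <-; congr (mD _).
Qed.

End Basics.

Section Reals.
Context (R : realType).

Definition wt (p : R) n (f : {ffun 'I_n -> bool}) : R :=
  \prod_(i < n) (if f i then p else 1 - p).

Arguments wt p {n} f.

Definition rho (p q : R) : R := Num.sqrt (p * q) + Num.sqrt ((1 - p) * (1 - q)).

Lemma wt_ge0 p n f : 0 <= p <= 1 -> 0 <= @wt p n f.
Proof.
move=> /andP[p0 p1]; apply: prodr_ge0 => i _; case: (f i) => //.
by rewrite subr_ge0.
Qed.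

Lemma sqrt_prod (I : finType) (x : I -> R) : (forall i, 0 <= x i) ->
  Num.sqrt (\prod_i x i) = \prod_i Num.sqrt (x i).
Proof.
move=> x0.
pose K := fun a b : R => 0 <= a /\ Num.sqrt a = b.
suff [] : K (\prod_i x i) (\prod_i Num.sqrt (x i)) by [].
apply: (big_ind2 K).
- by split; rewrite ?sqrtr1.
- move=> a1 b1 a2 b2 [h1 <-] [h2 <-]; split; first exact: mulr_ge0.
  by rewrite sqrtrM.
- by move=> i _; split.
Qed.

Lemma sum_sqrt n p q : 0 <= p <= 1 -> 0 <= q <= 1 ->
  \sum_(f : {ffun 'I_n -> bool}) Num.sqrt (wt p f * wt q f) = rho p q ^+ n.
Proof.
move=> /andP[p0 p1] /andP[q0 q1].
have h f : wt p f * wt q f = \prod_(i < n)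
   ((if f i then p else 1 - p) * (if f i then q else 1 - q)).
  by rewrite /wt -big_split.
pose F := fun (i : 'I_n) (b : bool) =>
  Num.sqrt ((if b then p else 1 - p) * (if b then q else 1 - q)).
rewrite (eq_bigr (fun f : {ffun 'I_n -> bool} => \prod_(i < n) F i (f i))); last first.
  move=> f _; rewrite h sqrt_prod //.
  move=> i; case: (f i); apply: mulr_ge0 => //; by rewrite subr_ge0.
rewrite -(bigA_distr_bigA (fun i b => F i b)).
rewrite (eq_bigr (fun _ => rho p q)); last by move=> i _; rewrite big_bool.
by rewrite prodr_const card_ord.
Qed.

Lemma rho_ge0 p q : 0 <= rho p q.
Proof. by rewrite /rho addr_ge0 ?sqrtr_ge0. Qed.

Lemma rho_lt1 p q : 0 <= p <= 1 -> 0 <= q <= 1 -> p != q -> rho p q < 1.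
Proof.
move=> /andP[p0 p1] /andP[q0 q1] pq.
have p1' : 0 <= 1 - p by rewrite subr_ge0.
have q1' : 0 <= 1 - q by rewrite subr_ge0.
rewrite /rho !sqrtrM //.
set a := Num.sqrt p; set b := Num.sqrt q; set c := Num.sqrt (1 - p);
  set d := Num.sqrt (1 - q).
have ha : a ^+ 2 = p by rewrite sqr_sqrtr.
have hb : b ^+ 2 = q by rewrite sqr_sqrtr.
have hc : c ^+ 2 = 1 - p by rewrite sqr_sqrtr.
have hd : d ^+ 2 = 1 - q by rewrite sqr_sqrtr.
have ab : a != b.
  by apply: contra pq => /eqP abe; rewrite -ha -hb abe.
have : 0 < (a - b) ^+ 2 by rewrite exprn_even_gt0 // subr_eq0.
have : 0 <= (c - d) ^+ 2 by rewrite sqr_ge0.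
move: ha hb hc hd; rewrite !expr2 => ha hb hc hd.
nra.
Qed.

Lemma wt_le_sqrt (x y : R) : 0 <= x -> x <= y -> x <= Num.sqrt (x * y).
Proof.
move=> x0 xy.
rewrite -{1}(ger0_norm x0) -sqrtr_sqr ler_sqrt; last first.
  by apply: mulr_ge0 => //; exact: le_trans xy.
by rewrite expr2 ler_wpM2l.
Qed.

Lemma bound_sum n p q (S : pred {ffun 'I_n -> bool}) :
  0 <= p <= 1 -> 0 <= q <= 1 ->
  (forall f, S f -> wt p f <= wt q f) ->
  \sum_(f | S f) wt p f <= rho p q ^+ n.
Proof.
move=> hp hq hS.
rewrite -(sum_sqrt n p q hp hq) [leRHS](bigID S) /=.
rewrite -[leLHS]addr0 lerD //.
  by apply: ler_sum => f Sf; apply: wt_le_sqrt; [exact: wt_ge0|exact: hS].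
by apply: sumr_ge0 => f _; exact: sqrtr_ge0.
Qed.

Lemma exists_small (r eps : R) : 0 <= r < 1 -> 0 < eps -> exists n, r ^+ n <= eps.
Proof.
move=> /andP[r0 r1] e0.
have : `|r| < 1 by rewrite ger0_norm.
move=> /(cvg_geometric 1) /cvgrPdist_lt /(_ _ e0) [N _ HN].
exists N; have := HN N (leqnn N); rewrite /= sub0r normrN /geometric mul1r.
by rewrite ger0_norm ?exprn_ge0 // => /ltW.
Qed.

End Reals.
Arguments wt {R} p {n} f.
Arguments rho {R} p q.
Arguments rho_ge0 {R} p q.
Arguments rho_lt1 {R} [p q].
Arguments bound_sum {R} [n p q] S.
Arguments exists_small {R} [r eps].
Arguments wt_ge0 {R} [p n] f.

Section Core.
Context (R : realType) (G : countZmodType) (e : nat -> D) (Ast : set G).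

Definition Cs n (f : {ffun 'I_n -> bool}) : set (Cfg G) :=
  [set z | forall i : 'I_n, [set w | `[< Ast w >] = f i] (z (e i))].

Arguments Cs {n} f.

Definition pat n (z : Cfg G) : {ffun 'I_n -> bool} :=
  [ffun i : 'I_n => `[< Ast (z (e i)) >]].

Lemma Cs_pat n f z : Cs f z <-> pat n z = f.
Proof.
split => [H|<- i]; last by rewrite /= ffunE.
by apply/ffunP => i; rewrite ffunE; exact: H.
Qed.

Lemma Cs_meas n f : measurable (@Cs n f).
Proof. exact: (@fin_meas G _ (fun i : 'I_n => e i) (fun i => [set w | `[< Ast w >] = f i])). Qed.

Lemma bigU_in n (s : seq {ffun 'I_n -> bool}) z :
  (\big[setU/set0]_(f <- s) Cs f) z <-> pat n z \in s.
Proof.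
elim: s => [|x s IH]; first by rewrite big_nil in_nil.
rewrite big_cons in_cons; split.
  by case => [/Cs_pat ->|/IH ->]; rewrite ?eqxx ?orbT.
by case/orP => [/eqP/Cs_pat|/IH]; [left|right].
Qed.

Lemma bigU_meas n (s : seq {ffun 'I_n -> bool}) :
  measurable (\big[setU/set0]_(f <- s) Cs f).
Proof.
by elim: s => [|x s IH]; rewrite ?big_nil ?big_cons //; exact: measurableU (Cs_meas _ _) IH.
Qed.

Lemma bigU_val (P : measure (Cfg G) R) n (w : {ffun 'I_n -> bool} -> R)
  (hP : forall f, P (Cs f) = (w f)%:E) (s : seq {ffun 'I_n -> bool}) :
  uniq s -> P (\big[setU/set0]_(f <- s) Cs f) = (\sum_(f <- s) w f)%:E.
Proof.
elim: s => [|x s IH]; first by rewrite !big_nil measure0.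
rewrite /= => /andP[xs us].
rewrite !big_cons measureU ?IH ?hP ?EFinD //.
- by congr (_ + _)%E; [exact: hP|exact: IH].
- exact: Cs_meas.
- exact: bigU_meas.
apply/seteqP; split => z //= [/Cs_pat zx /bigU_in]; rewrite zx.
by move=> xs'; rewrite xs' in xs.
Qed.

Arguments bigU_val {P n w} hP s.

Lemma pred_val (P : measure (Cfg G) R) n (w : {ffun 'I_n -> bool} -> R)
  (hP : forall f, P (Cs f) = (w f)%:E) (S : pred {ffun 'I_n -> bool}) :
  P [set z | S (pat n z)] = (\sum_(f | S f) w f)%:E.
Proof.
rewrite (_ : [set z | _] = \big[setU/set0]_(f <- enum S) Cs f); last first.
  by apply/seteqP; split => z /=; rewrite bigU_in mem_enum.
by rewrite (bigU_val hP) ?enum_uniq // big_enum.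
Qed.

Arguments pred_val {P n w} hP S.

Lemma pred_meas n (S : pred {ffun 'I_n -> bool}) :
  measurable [set z : Cfg G | S (pat n z)].
Proof.
rewrite (_ : [set z | _] = \big[setU/set0]_(f <- enum S) Cs f); last first.
  by apply/seteqP; split => z /=; rewrite bigU_in mem_enum.
exact: bigU_meas.
Qed.

Lemma half_sum (P : measure (Cfg G) R) (F : nat -> set (Cfg G)) :
  (forall k, P (F k) <= ((2 ^ k.+1)%:R^-1)%:E)%E ->
  (\sum_(0 <= k <oo) P (F k) < +oo)%E.
Proof.
move=> HF.
apply: (@le_lt_trans _ _ (\sum_(0 <= k <oo) (((2 ^ k.+1)%:R^-1 : R)%:E))%E).
  by apply: lee_nneseries => // k _ _; exact: measure_ge0.
have hE : eseries (fun k => ((2 ^ k.+1)%:R^-1 : R)%:E) @ \oo --> (1 : R)%:E.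
  have := @cvg_geometric_eseries_half R 1 0.
  rewrite expr0 divr1.
  rewrite (_ : (fun k => _) = (fun k => ((2 ^ k.+1)%:R^-1 : R)%:E)) //.
  by apply/funext => k; rewrite addn1 div1r.
have -> : (\sum_(0 <= k <oo) (((2 ^ k.+1)%:R^-1 : R)%:E) = (1 : R)%:E)%E.
  exact: cvg_lim.
by rewrite ltry.
Qed.

Lemma core (P1 P2 : measure (Cfg G) R) (p q : R) :
  0 <= p <= 1 -> 0 <= q <= 1 -> p != q ->
  (forall n (f : {ffun 'I_n -> bool}), P1 (Cs f) = (wt p f)%:E) ->
  (forall n (f : {ffun 'I_n -> bool}), P2 (Cs f) = (wt q f)%:E) ->
  msingular P1 P2.
Proof.
move=> hp hq pq h1 h2.
have r0 := rho_ge0 p q.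
have r1 := rho_lt1 hp hq pq.
have /choice [N HN] : forall k, exists n, rho p q ^+ n <= (2 ^ k.+1)%:R^-1.
  by move=> k; apply: exists_small; rewrite ?r0 ?r1 // invr_gt0 ltr0n expn_gt0.
pose S n : pred {ffun 'I_n -> bool} := fun f => wt p f <= wt q f.
pose F k := [set z : Cfg G | S (N k) (pat (N k) z)].
pose F' k := [set z : Cfg G | ~~ S (N k) (pat (N k) z)].
have mF k : measurable (F k) by exact: (pred_meas (N k) (S (N k))).
have mF' k : measurable (F' k).
  exact: (pred_meas (N k) (fun f => ~~ S (N k) f)).
have b1 k : (P1 (F k) <= ((2 ^ k.+1)%:R^-1)%:E)%E.
  rewrite /F (pred_val (h1 _)) lee_fin (le_trans _ (HN k)) //.
  by apply: bound_sum => // f.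
have b2 k : (P2 (F' k) <= ((2 ^ k.+1)%:R^-1)%:E)%E.
  rewrite /F' (pred_val (h2 (N k)) (fun f => ~~ S (N k) f)) lee_fin (le_trans _ (HN k)) //.
  rewrite (_ : rho p q = rho q p); last by rewrite /rho mulrC [X in _ + Num.sqrt X]mulrC.
  apply: bound_sum => // f; rewrite /S -ltNge; exact: ltW.
exists (lim_sup_set F); split.
  apply: bigcapT_measurable => n; apply: bigcup_measurable => k _; exact: mF.
split; first by apply: lim_sup_set_cvg0 => //; exact: half_sum.
apply/eqP; rewrite eq_le measure_ge0 andbT.
rewrite -(lim_sup_set_cvg0 mF' (half_sum _ _ b2)).
apply: le_measure; rewrite ?inE.
- apply: measurableC; apply: bigcapT_measurable => n.
  by apply: bigcup_measurable => k _; exact: mF.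
- apply: bigcapT_measurable => n; apply: bigcup_measurable => k _; exact: mF'.
move=> z /= nA n _.
apply: contrapT => H; apply: nA => k _.
exists (maxn n k); first by rewrite /= leq_maxr.
have : ~ F' (maxn n k) z.
  by move=> h; apply: H; exists (maxn n k) => //=; rewrite leq_maxl.
by rewrite /F' /F /= => /negP; rewrite negbK.
Qed.

End Core.

Lemma disc_ivt (P : nat -> bool) N : P 0%N -> ~~ P N ->
  exists j, (j < N)%N /\ P j /\ ~~ P j.+1.
Proof.
move=> P0; elim: N => [|N IH]; first by rewrite P0.
move=> nPN; case PN: (P N).
  by exists N; rewrite ltnSn PN nPN.
have [j [jN [Pj nPj]]] := IH (negbT PN).
by exists j; rewrite ltnS ltnW.
Qed.

Lemma D_range (d : D) : 0 <= sval d < 1.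
Proof.
case: d => q /= /asboolP [n [a [n1 [an ->]]]].
rewrite divr_ge0 ?ler0n //= ltr_pdivrMr ?ltr0n ?expn_gt0 // mul1r ltr_nat.
by apply: leq_ltn_trans an _; rewrite subn1 prednK ?expn_gt0 // leqnn.
Qed.

Lemma interval_of (s : seq rat) : is_sdp s -> forall x : rat, 0 <= x < 1 ->
  exists j, (j.+1 < size s)%N /\ nth 0 s j <= x < nth 0 s j.+1.
Proof.
move=> [s2 [h0 [l1 _]]] x /andP[x0 x1].
have := @disc_ivt (fun j => nth 0 s j <= x) (size s).-1.
rewrite nth0 h0 x0 nth_last l1 -ltNge x1 => /(_ isT isT) [j [jN [Pj nPj]]].
exists j; split; first by rewrite -ltn_predRL.
by rewrite Pj /= ltNge.
Qed.

Lemma same_interval (G : Type) (g : D -> G) : is_fr g -> forall d : D,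
  exists r : rat, sval d < r /\
    forall d' : D, sval d <= sval d' < r -> g d' = g d.
Proof.
move=> [s [sdp H]] d.
have [j [js /andP [lj jr]]] := interval_of _ sdp _ (D_range d).
exists (nth 0 s j.+1); split => // d' /andP [dd' d'r].
apply: (H j js) => //; last by rewrite lj.
by rewrite (le_trans lj dd').
Qed.

Lemma dyadic_points (d : D) (r : rat) : sval d < r -> r <= 1 ->
  exists e : nat -> D, injective e /\ forall i, sval d < sval (e i) < r.
Proof.
move=> dr r1.
case: d dr => x /= /asboolP [n [a [n1 [an xE]]]] dr.
set K := (n + Num.Def.archi_bound (r - x)^-1)%N.
have hK : (r - x)^-1 < 2 ^+ K by apply: upper_nthrootP; rewrite leq_addl.
have rx : 0 < r - x by rewrite subr_gt0.
have pt i : dyadicP (x + ((2 ^ (K + i))%:R)^-1).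
  pose m := (K + i - n)%N.
  have Km : (K + i = m + n)%N by rewrite /m subnK // /K -addnA leq_addr.
  have lt1 : x + ((2 ^ (K + i))%:R)^-1 < 1.
    apply: lt_le_trans r1.
    rewrite -ltrBrDl (le_lt_trans _ (_ : (2 ^+ K)^-1 < r - x)) //.
      rewrite -natrX lef_pV2 ?posrE ?ltr0n ?expn_gt0 // ler_nat.
      by rewrite leq_pexp2l // leq_addr.
    by rewrite -(invrK (r - x)) ltf_pV2 ?posrE ?invr_gt0 ?exprn_gt0.
  exists (K + i)%N, (a * 2 ^ m + 1)%N.
  have E : x + ((2 ^ (K + i))%:R)^-1 = (a * 2 ^ m + 1)%:R / (2 ^ (K + i))%:R.
    have u0 : (2 ^ m)%:R != 0 :> rat by rewrite pnatr_eq0 -lt0n expn_gt0.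
    have v0 : (2 ^ n)%:R != 0 :> rat by rewrite pnatr_eq0 -lt0n expn_gt0.
    rewrite xE Km expnD natrD !natrM.
    rewrite mulrDl mul1r invfM; congr (_ + _).
    by rewrite mulrA -(mulrA a%:R) mulfV // mulr1.
  split; first by rewrite Km (leq_trans n1) // leq_addl.
  split; last exact: E.
  move: lt1; rewrite E ltr_pdivrMr ?ltr0n ?expn_gt0 // mul1r ltr_nat.
  by move=> h; rewrite -ltnS subn1 prednK ?expn_gt0.
exists (fun i => exist (fun q => `[< dyadicP q >]) _ (asboolT (pt i)) : D); split.
  move=> i j /(congr1 sval) /= /addrI /invr_inj /eqP.
  rewrite eqr_nat eqn_exp2l // eqn_add2l => /eqP //.
move=> i /=; rewrite ltrDl invr_gt0 ltr0n expn_gt0 /=.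
rewrite -ltrBrDl (le_lt_trans _ (_ : (2 ^+ K)^-1 < r - x)) //.
  rewrite -natrX lef_pV2 ?posrE ?ltr0n ?expn_gt0 // ler_nat.
  by rewrite leq_pexp2l // leq_addr.
by rewrite -(invrK (r - x)) ltf_pV2 ?posrE ?invr_gt0 ?exprn_gt0.
Qed.

Lemma exists_seq (G : Type) (g g' : D -> G) : is_fr g -> is_fr g' ->
  forall d : D, exists e : nat -> D, injective e /\
    forall i, g (e i) = g d /\ g' (e i) = g' d.
Proof.
move=> fr fr' d.
have [r1 [dr1 H1]] := same_interval _ _ fr d.
have [r2 [dr2 H2]] := same_interval _ _ fr' d.
have [e [ie He]] : exists e : nat -> D, injective e /\
    forall i, sval d < sval (e i) < Num.min (Num.min r1 r2) 1.
  apply: dyadic_points; last by rewrite ge_min lexx orbT.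
  by rewrite !lt_min dr1 dr2 (proj2 (andP (D_range d))).
exists e; split => // i.
have /andP [h1 h2] := He i.
move: h2; rewrite !lt_min => /andP [/andP [h2 h3] _].
split; [apply: H1|apply: H2]; by rewrite ltW ?h2 ?h3.
Qed.

Section Main.
Context (R : realType) (G : countZmodType) (m : probability (disc G) R)
  (mD : probability (Cfg G) R) (mD_prod : is_product_measure m mD).

Local Notation pm a := (pushforward m (transl a)).

Lemma pmD_setT g : pushforward mD (act g) setT = 1%E.
Proof. by rewrite /pushforward preimage_setT probability_setT. Qed.

Lemma fdd_seq g ds (A : D -> set G) : uniq ds ->
  pushforward mD (act g) [set z | forall d, d \in ds -> A d (z d)] =
  (\prod_(d <- ds) pm (g d) (A d))%E.
Proof. by move=> u; exact: (mD_prod ds (fun d => transl (g d) @^-1` A d) u). Qed.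

Definition Gpi : set (set (Cfg G)) := [set B | exists ds (A : D -> set G),
  uniq ds /\ B = [set z | forall d, d \in ds -> A d (z d)]].

Lemma Gpi_gen : @measurable _ (Cfg G) = <<s Gpi >>.
Proof.
apply/seteqP; split.
  apply: sub_sigma_algebra2 => _ [d [A ->]].
  exists [:: d], (fun _ => A); split => //.
  apply/seteqP; split => z /=.
    by move=> H d'; rewrite inE => /eqP ->.
  by move/(_ d); rewrite mem_head; apply.
apply: smallest_sub; first exact: sigma_algebra_measurable.
move=> _ [ds [A [_ ->]]]; exact: seq_meas.
Qed.

Lemma Gpi_setI : setI_closed Gpi.
Proof.
move=> _ _ [ds1 [A1 [u1 ->]]] [ds2 [A2 [u2 ->]]].
exists (undup (ds1 ++ ds2)), (fun d => (if d \in ds1 then A1 d else setT) `&`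
  (if d \in ds2 then A2 d else setT)).
split; first exact: undup_uniq.
apply/seteqP; split => z /=.
  move=> [H1 H2] d _; split; case: ifP => [hd|_] //; [exact: H1|exact: H2].
move=> H; split => d hd.
  have := H d; rewrite mem_undup mem_cat hd /= => /(_ isT) [+ _].
  by rewrite ?hd.
have := H d; rewrite mem_undup mem_cat hd orbT => /(_ isT) [_].
by rewrite ?hd.
Qed.

Lemma part2 g g' : (forall d, meq (pm (g d)) (pm (g' d))) ->
  meq (pushforward mD (act g)) (pushforward mD (act g')).
Proof.
move=> H A mA.
apply: (measure_unique Gpi (fun _ => setT) Gpi_gen Gpi_setI _ _
  (pmu R G mD g) (pmu R G mD g')) => //.
- move=> _; exists [::], (fun _ => setT); split => //.
  by apply/seteqP; split => z //= _ d; rewrite in_nil.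
- by apply/seteqP; split => z // _; exists 0%N.
- move=> _ [ds [B [u ->]]]; rewrite !pmuE !fdd_seq //.
  by apply: eq_bigr => d _; apply: H.
- by move=> _; rewrite pmuE pmD_setT ltry.
Qed.

Lemma part1a g g' :
  msingular (pushforward mD (act g)) (pushforward mD (act g')) ->
  exists d, ~ meq (pm (g d)) (pm (g' d)).
Proof.
move=> [A [mA [h1 h2]]]; apply: contrapT => nex.
have H : forall d, meq (pm (g d)) (pm (g' d)).
  by move=> d; apply: contrapT => nd; apply: nex; exists d.
have E := part2 _ _ H.
have key : (pushforward mD (act g) (A `|` ~` A) =
   pushforward mD (act g) A + pushforward mD (act g) (~` A))%E.
  exact: (measureU (pmu R G mD g) mA (measurableC mA) (setICr A)).
move: key; rewrite setUCr pmD_setT h1 (E _ (measurableC mA)) h2 adde0.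
by move/eqP; rewrite onee_eq0.
Qed.

Lemma pm_val a (X : set G) : exists p : R, pm a X = p%:E /\ 0 <= p <= 1.
Proof.
have h0 : (0 <= pm a X)%E by apply: measure_ge0.
have h1 : (pm a X <= 1)%E by apply: probability_le1.
move: h0 h1; case: (pm a X) => [p | | ] //=; rewrite ?lee_fin => h0 h1.
by exists p; rewrite h0 h1.
Qed.

Lemma pm_setC a (X : set G) : pm a (~` X) = (1 - pm a X)%E.
Proof. by rewrite /pushforward -preimage_setC probability_setC. Qed.

Lemma fdd_Cs g (e : nat -> D) (ie : injective e) a (A0 : set G) p
  (ga : forall i, g (e i) = a) (Ep : pm a A0 = p%:E) n (f : {ffun 'I_n -> bool}) :
  pmu R G mD g (Cs G e A0 n f) = (wt p f)%:E.
Proof.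
have iE : injective (fun i : 'I_n => e i) by move=> i j /ie /val_inj.
rewrite (_ : pmu R G mD g (Cs G e A0 n f) =
   \prod_(i : 'I_n) pm (g (e i)) [set w | `[< A0 w >] = f i])%E; last first.
  exact: (fdd_push R G mD m mD_prod g _ _ iE (fun i => [set w | `[< A0 w >] = f i])).
rewrite /wt -prodEFin; apply: eq_bigr => i _; rewrite ga.
case: (f i).
  rewrite -Ep; congr (pm a _).
  by apply/seteqP; split => w /=; [move/asboolP|move=> h; exact/asboolP].
rewrite EFinB -Ep -pm_setC; congr (pm a _).
apply/seteqP; split => w /=; first by move/negbT/asboolPn.
by move=> h; apply/negbTE/asboolPn.
Qed.

Lemma part1b g g' d : is_fr g -> is_fr g' -> ~ meq (pm (g d)) (pm (g' d)) ->
  msingular (pushforward mD (act g)) (pushforward mD (act g')).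
Proof.
move=> fr fr' nmeq.
have [A0 [mA0 neq]] : exists A0, measurable A0 /\ pm (g d) A0 <> pm (g' d) A0.
  apply: contrapT => H; apply: nmeq => A mA; apply: contrapT => ne.
  by apply: H; exists A.
have [e [ie He]] := exists_seq _ _ _ fr fr' d.
have [p [Ep hp]] := pm_val (g d) A0.
have [q [Eq hq]] := pm_val (g' d) A0.
have pq : p != q by apply/eqP => pq; apply: neq; rewrite Ep Eq pq.
apply: (core R G e A0 (pmu R G mD g) (pmu R G mD g') p q hp hq pq).
  by move=> n f; exact: (fdd_Cs g e ie (g d) A0 p (fun i => proj1 (He i)) Ep n f).
by move=> n f; exact: (fdd_Cs g' e ie (g' d) A0 q (fun i => proj2 (He i)) Eq n f).
Qed.

End Main.

Lemma no_inv (R : realType) (G : countZmodType) (m : probability (disc G) R)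
  (m_pos : forall chi : disc G, (0 < m [set chi])%E) (tf : torsion_free G)
  (a b : G) :
  a != b -> ~ meq (pushforward m (transl a)) (pushforward m (transl b)).
Proof.
move=> ab H.
pose c := a - b.
have c0 : c != 0 by rewrite subr_eq0.
have key (y : G) : m [set y] = m [set y + c].
  have := H [set y + a] Logic.I.
  rewrite /pushforward.
  rewrite (_ : transl a @^-1` [set y + a] = [set y]); last first.
    apply/seteqP; split => w /=; rewrite /transl.
      by move=> h; have := congr1 (fun t => t - a) h; rewrite /= [a + w]addrC !addrK.
    by move=> ->; rewrite addrC.
  rewrite (_ : transl b @^-1` [set y + a] = [set y + c]) //.
  apply/seteqP; split => w /=; rewrite /transl /c.
    by move=> h; rewrite addrA -h [b + w]addrC addrK.
  by move=> ->; rewrite addrCA [b + _]addrC subrK.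
have kc k : m [set c *+ k] = m [set (0 : G)].
  by elim: k => [|k IH]; [rewrite mulr0n|rewrite mulrSr -key IH].
have dist j k : (j < k)%N -> c *+ j != c *+ k.
  move=> jk; apply/eqP => h.
  have : c *+ (k - j) = 0.
    apply: (@addrI _ (c *+ j)); rewrite addr0 -mulrnDr (subnKC (ltnW jk)).
    by rewrite h.
  by move/(tf _ _ _); rewrite subn_gt0 => /(_ jk) /eqP; rewrite (negbTE c0).
have [p0 [Ep0 p0pos]] : exists p0 : R, m [set (0 : G)] = p0%:E /\ 0 < p0.
  have h0 := m_pos 0.
  have h1 : (m [set (0 : G)%R] <= 1)%E by apply: probability_le1.
  move: h0 h1; case: (m [set (0 : G)]) => [p | | ] //=; rewrite ?lte_fin => h0 h1.
  by exists p.
pose U N := \big[setU/set0]_(k < N) [set c *+ k].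
have Uin N z : U N z -> exists k, (k < N)%N /\ z = c *+ k.
  elim: N z => [|N IH] z; first by rewrite /U big_ord0.
  rewrite /U big_ord_recr /= => -[/IH [k [kN ->]]|->].
    by exists k; split => //; rewrite ltnS ltnW.
  by exists N.
have mU N : m (U N) = (N%:R * p0)%:E.
  elim: N => [|N IH]; first by rewrite /U big_ord0 measure0 mul0r.
  have -> : U N.+1 = U N `|` [set c *+ N] by rewrite /U big_ord_recr.
  have disj : U N `&` [set c *+ N] = set0.
    apply/seteqP; split => z // [] /Uin [k [kN ->]] /eqP.
    by rewrite (negbTE (dist _ _ kN)).
  have E : (m (U N `|` [set (c *+ N)%R]) = m (U N) + m [set (c *+ N)%R])%E.
    exact: (measureU m Logic.I Logic.I disj).
  by rewrite E IH kc Ep0 -EFinD -addn1 natrD mulrDl mul1r.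
pose N := Num.Def.archi_bound p0^-1.
have hN : p0^-1 < N%:R by apply: archi_boundP; rewrite invr_ge0 ltW.
have : (m (U N) <= 1)%E by apply: probability_le1.
rewrite mU lee_fin; apply/negP; rewrite -ltNge.
by rewrite -ltr_pdivrMr // div1r.
Qed.

Theorem lemma3p9 (R : realType) (G : countZmodType)
  (m : probability (disc G) R)
  (m_pos : forall chi : disc G, (0 < m [set chi])%E)
  (mD : probability (Cfg G) R)
  (mD_prod : is_product_measure m mD) :
  (forall g g' : D -> G, is_fr g -> is_fr g' ->
     (msingular (pushforward mD (act g)) (pushforward mD (act g')) <->
      exists d : D,
        ~ meq (pushforward m (transl (g d))) (pushforward m (transl (g' d))))
     /\
     ((forall d : D,
         meq (pushforward m (transl (g d))) (pushforward m (transl (g' d)))) ->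
      meq (pushforward mD (act g)) (pushforward mD (act g'))))
  /\
  (torsion_free G ->
   forall g g' : D -> G, is_fr g -> is_fr g' -> g <> g' ->
     msingular (pushforward mD (act g)) (pushforward mD (act g'))).
Proof.
split.
  move=> g g' fr fr'; split; last exact: (part2 R G m mD mD_prod g g').
  split; first exact: (part1a R G m mD mD_prod g g').
  by move=> [d nd]; exact: (part1b R G m mD mD_prod g g' d fr fr' nd).
move=> tf g g' fr fr' gg'.
have [d nd] : exists d, g d != g' d.
  apply: contrapT => H; apply: gg'; apply/funext => d.
  by apply/eqP; apply: contrapT => nd; apply: H; exists d; exact/negP.
exact: (part1b R G m mD mD_prod g g' d fr fr' (no_inv R G m m_pos tf _ _ nd)).
Qed.
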